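(* The functor $G=P\circ P_+\big|_\Omega:\Omega\rightarrow\Sigma$ is injective on objects and morphisms. Thus, there exists an $\Omega$ category $G\Omega$ having the functor $G$ with the target category restricted from $\Sigma$ to $G\Omega$ as its stalk isofunctor. Furthermore, $G\Omega$ is a non monoidal subcategory of $\Sigma$.
   Context: $\Sigma$ is the category of finite sets and functions; $\Omega$ is its full subcategory of finite von Neumann ordinals $[l]=\{0,\dots,l-1\}$ ($[0]=\emptyset$), strict monoidal with $[l]\smile[m]=[l+m]$, $f\smile g(i)=f(i)$ for $i\in[l]$ and $g(i-l)+p$ for $i\in[m]+l$ (for $f:[l]\to[p]$, $g:[m]\to[q]$), unit $[0]$. $P:\Sigma\to\Sigma$ is the finite power set endofunctor ($PA$ the set of subsets of $A$, $P\phi(X)=\phi(X)$), and $P_+:\Sigma\to\Sigma$ the non empty power set endofunctor ($P_+A$ the set of non empty subsets, $P_+\phi(X)=\phi(X)$). An $\Omega$ category is a Pro category $D\Omega$ with a strict monoidal isofunctor (stalk isofunctor) $D:\Omega\to D\Omega$; given a functor $D$ injective on objects and morphisms, the $\Omega$ category $D\Omega$ has objects $D[l]$, morphisms $Df$, composition $Dg\circ Df=D(g\circ f)$, identities $D\,\mathrm{id}_{[l]}$, monoidal products $D[l]\smile D[m]=D([l]\smile[m])$, $Df\smile Dg=D(f\smile g)$ and unit $D[0]$. *)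

(* Defs.v *)
From HB Require Import structures.
From mathcomp Require Import all_boot all_order.
From mathcomp Require Import finmap.
Set Implicit Arguments. Unset Strict Implicit. Unset Printing Implicit Defensive.
Local Open Scope fset_scope.

(* Finite sets of Sigma are modelled as finite sets [{fset T}] over an ambient
   choiceType; a Sigma-morphism A -> B is a function T -> U considered on A. *)

Definition vn_ord (l : nat) : {fset nat} := [fset i | i in iota 0 l].

Definition Pobj (T : choiceType) (A : {fset T}) : {fset {fset T}} := fpowerset A.
Definition Pmor (T U : choiceType) (phi : T -> U) : {fset T} -> {fset U} :=
  fun X => phi @` X.

Definition Pplus_obj (T : choiceType) (A : {fset T}) : {fset {fset T}} :=
  [fset X in fpowerset A | X != fset0].
Definition Pplus_mor (T U : choiceType) (phi : T -> U) : {fset T} -> {fset U} :=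
  fun X => phi @` X.

(* A morphism f : [l] -> [p] of Omega, seen as a function on the ambient type nat
   (its values outside [l] are irrelevant). *)
Definition omega_fun (l p : nat) (f : 'I_l -> 'I_p) : nat -> nat :=
  fun i => odflt i (omap (fun j : 'I_l => nat_of_ord (f j)) (insub i)).

Definition G_obj (l : nat) : {fset {fset {fset nat}}} := Pobj (Pplus_obj (vn_ord l)).
Definition G_mor (l p : nat) (f : 'I_l -> 'I_p) :
  {fset {fset nat}} -> {fset {fset nat}} := Pmor (Pplus_mor (omega_fun f)).

(* Main.v *)
Require Import Defs.
From HB Require Import structures.
From mathcomp Require Import all_boot all_order.
From mathcomp Require Import finmap.
Local Open Scope fset_scope.

Set Implicit Arguments. Unset Strict Implicit.

Lemma in_vn i l : (i \in vn_ord l) = (i < l)%N.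
Proof. by rewrite /vn_ord in_fset /= mem_iota. Qed.

Lemma card_vn l : #|` vn_ord l| = l.
Proof. by rewrite /vn_ord card_fseq undup_id ?iota_uniq // size_iota. Qed.

Lemma in_Pplus (T : choiceType) (A X : {fset T}) :
  (X \in Pplus_obj A) = (X `<=` A) && (X != fset0).
Proof. by rewrite /Pplus_obj !inE /= fpowersetE. Qed.

Lemma card_Pplus (T : choiceType) (A : {fset T}) :
  #|` Pplus_obj A| = (2 ^ #|` A| - 1)%N.
Proof.
rewrite -card_fpowerset (cardfsD1 fset0 (fpowerset A)) fpowersetE fsub0set /=.
rewrite add1n subn1 /=; congr #|` _|; apply/fsetP => X.
by rewrite in_fsetD1 in_Pplus fpowersetE andbC.
Qed.

Lemma card_G l : #|` G_obj l| = (2 ^ (2 ^ l - 1))%N.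
Proof. by rewrite /G_obj /Pobj card_fpowerset card_Pplus card_vn. Qed.

Lemma omega_lt l p (f : 'I_l -> 'I_p) i (H : (i < l)%N) :
  omega_fun f i = f (Ordinal H).
Proof. by rewrite /omega_fun insubT /=. Qed.

Lemma omega_id l i : omega_fun (@id 'I_l) i = i.
Proof. by rewrite /omega_fun; case: insubP => //= j _ ->. Qed.



Lemma Gobj_sub l X Y : X \in G_obj l -> Y \in X -> (Y `<=` vn_ord l) /\ Y != fset0.
Proof.
rewrite /G_obj /Pobj fpowersetE => /fsubsetP H /H.
by rewrite in_Pplus => /andP.
Qed.

Lemma part1 : (forall (l p : nat) (f : 'I_l -> 'I_p),
      {in G_obj l, forall X, G_mor f X \in G_obj p}).
Proof.
  move=> l p f X HX; rewrite /G_obj /Pobj fpowersetE; apply/fsubsetP => Z.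
  case/imfsetP => /= Y YX ->; have [Ysub Yn0] := Gobj_sub HX YX.
  rewrite in_Pplus; apply/andP; split.
    apply/fsubsetP => j /imfsetP [/= i iY ->].
    have := fsubsetP Ysub i iY; rewrite in_vn => il.
    by rewrite (omega_lt _ il) in_vn.
  case/fset0Pn: Yn0 => i iY; apply/fset0Pn; exists (omega_fun f i).
  by apply/imfsetP; exists i.
Qed.
Lemma part2 : (forall l : nat, {in G_obj l, G_mor (@id 'I_l) =1 id}).
Proof.
  move=> l X _; rewrite /G_mor /Pmor /Pplus_mor.
  rewrite -[RHS]imfset_id; apply: eq_in_imfset => Y _ /=.
  rewrite -[RHS]imfset_id; apply: eq_in_imfset => i _ /=.
  exact: omega_id.
Qed.
Lemma part3 : (forall (l p r : nat) (f : 'I_l -> 'I_p) (g : 'I_p -> 'I_r),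
      {in G_obj l, G_mor (g \o f) =1 G_mor g \o G_mor f}).
Proof.
  move=> l p r f g X HX; rewrite /G_mor /Pmor /Pplus_mor /= -imfset_comp.
  apply: eq_in_imfset => Y YX /=; rewrite -imfset_comp.
  apply: eq_in_imfset => i iY /=.
  have [Ysub _] := Gobj_sub HX YX.
  have := fsubsetP Ysub i iY; rewrite in_vn => il.
  rewrite !(omega_lt _ il) /= (omega_lt _ (ltn_ord _)).
  by congr (nat_of_ord (g _)); apply: val_inj.
Qed.
Lemma part4 : (forall l m : nat, G_obj l = G_obj m -> l = m).
Proof.
  have key : forall l m, G_obj l = G_obj m -> (l <= m)%N.
    move=> [|n] m // E.
    have H1 : [fset [fset n]] \in G_obj n.+1.
      rewrite /G_obj /Pobj fpowersetE fsub1set in_Pplus fsub1set in_vn ltnSn.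
      by apply/fset0Pn; exists n; rewrite inE.
    rewrite E in H1; have [] := Gobj_sub H1 (fset11 _).
    by rewrite fsub1set in_vn.
  by move=> l m E; apply/eqP; rewrite eqn_leq !key.
Qed.
Lemma omega_ord l p (f : 'I_l -> 'I_p) (i : 'I_l) : omega_fun f i = f i.
Proof. by rewrite /omega_fun valK. Qed.

Lemma part5 : (forall (l p : nat) (f g : 'I_l -> 'I_p),
      {in G_obj l, G_mor f =1 G_mor g} -> f =1 g).
Proof.
  move=> l p f g H i.
  have Hi : [fset [fset nat_of_ord i]] \in G_obj l.
    rewrite /G_obj /Pobj fpowersetE fsub1set in_Pplus fsub1set in_vn ltn_ord.
    by apply/fset0Pn; exists (nat_of_ord i); rewrite inE.
  have := H _ Hi; rewrite /G_mor /Pmor /Pplus_mor !imfset_fset1 !omega_ord.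
  move=> E; apply: val_inj.
  apply: (@fset1_inj nat); apply: (@fset1_inj {fset nat}).
  exact: E.
Qed.
Lemma part6 : (exists l m : nat,
      #|` G_obj (l + m)| <> (#|` G_obj l| + #|` G_obj m|)%N /\
      #|` G_obj (l + m)| <> (#|` G_obj l| * #|` G_obj m|)%N).
Proof. by exists 1%N, 1%N; rewrite !card_G. Qed.

Theorem proposition3p1 :
  (* G is a functor Omega -> Sigma *)
  (forall (l p : nat) (f : 'I_l -> 'I_p),
      {in G_obj l, forall X, G_mor f X \in G_obj p}) /\
  (forall l : nat, {in G_obj l, G_mor (@id 'I_l) =1 id}) /\
  (forall (l p r : nat) (f : 'I_l -> 'I_p) (g : 'I_p -> 'I_r),
      {in G_obj l, G_mor (g \o f) =1 G_mor g \o G_mor f}) /\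
  (* G is injective on objects *)
  (forall l m : nat, G_obj l = G_obj m -> l = m) /\
  (* G is injective on morphisms (same source and target; different ones are
     separated by injectivity on objects) *)
  (forall (l p : nat) (f g : 'I_l -> 'I_p),
      {in G_obj l, G_mor f =1 G_mor g} -> f =1 g) /\
  (* G Omega is not a monoidal subcategory of Sigma: its monoidal product
     G[l] \smile G[m] = G[l+m] is not (isomorphic to) the disjoint union nor the
     cartesian product of G[l] and G[m] in Sigma *)
  (exists l m : nat,
      #|` G_obj (l + m)| <> (#|` G_obj l| + #|` G_obj m|)%N /\
      #|` G_obj (l + m)| <> (#|` G_obj l| * #|` G_obj m|)%N).
Proof.
exact: (conj part1 (conj part2 (conj part3 (conj part4 (conj part5 part6))))).
Qed.
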